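(* Let $\mathcal C$ be a class of groups with $\Lambda$-valued pseudo-norms and let $(G,\ell)$ be a group with a $\Lambda$-valued pseudo-norm. Then the following are equivalent: (1) $(G,\ell)$ is metrically LE$\mathcal C$; (2) for every finitely generated subgroup $L\le G$ (with the restricted pseudo-norm) there are pseudo-normed groups $(L_n,\ell_n)$, $n\in\mathbb N$, and isometric homomorphisms $\varphi_n:(L_n,\ell_n)\to(L_{n+1},\ell_{n+1})$ such that: (i) $L$ is the direct limit of the direct system $(L_n,\varphi_{n,m})$, $\varphi_{n,m}=\varphi_{m-1}\circ\cdots\circ\varphi_n$, via isometric homomorphisms $\psi_n:L_n\to L$ with $\psi_{n+1}\circ\varphi_n=\psi_n$; (ii) for every $n$, every finite $Q\subseteq\Lambda\cap\mathbb Q$ with $0\in Q$ and every finite $E'\subseteq L_n$ on which $\psi_n$ is injective, there is a group homomorphism from $L_n$ to some $(C,\ell_C)\in\mathcal C$ which is an $E'$-$Q$-almost-homomorphism from $(L_n,\ell_n)$ to $(C,\ell_C)$; (iii) each $L_n$ is residually $\mathcal C$ as an abstract group, i.e. for every $g\in L_n\setminus\{1\}$ there are $(C,\ell_C)\in\mathcal C$ and a group homomorphism $L_n\to C$ not sending $g$ to $1$.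
   Context: $\Lambda$ is a closed convex subset of $[0,\infty)$ containing $0$. A pseudo-norm on $G$ is $\ell:G\to\Lambda$ with $\ell(1)=0$, $\ell(g)=\ell(g^{-1})$, $\ell(gh)\le\ell(g)+\ell(h)$. A homomorphism $\phi:(G_1,\ell_1)\to(G_2,\ell_2)$ is isometric if $\ell_2(\phi(h))=\ell_1(h)$ for all $h$. For pseudo-normed $(G_1,\ell_1),(G_2,\ell_2)$, finite $D\subseteq G_1$ and finite $Q\subseteq\Lambda\cap\mathbb Q$ with $0\in Q$, $\varphi:G_1\to G_2$ is a $D$-$Q$-almost-homomorphism if injective on $D$, $\varphi(hg)=\varphi(h)\varphi(g)$ whenever $h,g,hg\in D$, and $\ell_1(g)\,\square\,q\iff\ell_2(\varphi(g))\,\square\,q$ for all $g\in D,q\in Q,\square\in\{<,=,>\}$. $(G,\ell)$ is metrically LE$\mathcal C$ if for every finite $D\subseteq G$ and finite $Q\subseteq\Lambda\cap\mathbb Q$ with $0\in Q$ there are $(C,\ell_C)\in\mathcal C$ and a $D$-$Q$-almost-homomorphism $G\to C$. *)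

(* Defs.v *)
From Stdlib Require Import Reals List ProofIrrelevance.
Open Scope R_scope.

Record Grp := {
  gcar :> Type;
  gmul : gcar -> gcar -> gcar;
  gone : gcar;
  ginv : gcar -> gcar;
  gmulA : forall x y z, gmul x (gmul y z) = gmul (gmul x y) z;
  gmul1l : forall x, gmul gone x = x;
  gmul1r : forall x, gmul x gone = x;
  gmulVl : forall x, gmul (ginv x) x = gone;
  gmulVr : forall x, gmul x (ginv x) = gone
}.
Arguments gmul {g}.
Arguments gone {g}.
Arguments ginv {g}.

Definition is_hom {G H : Grp} (f : G -> H) : Prop :=
  forall x y : G, f (gmul x y) = gmul (f x) (f y).

Record PNGrp := { pgrp :> Grp; plen : gcar pgrp -> R }.
Arguments plen {p}.

Definition admissible_Lambda (Lam : R -> Prop) : Prop :=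
  Lam 0 /\
  (forall x, Lam x -> 0 <= x) /\
  (forall x y t, Lam x -> Lam y -> 0 <= t <= 1 -> Lam (t * x + (1 - t) * y)) /\
  (forall x, (forall eps, 0 < eps -> exists y, Lam y /\ Rabs (x - y) < eps) -> Lam x).

Definition pseudo_norm (Lam : R -> Prop) (G : PNGrp) : Prop :=
  (forall g : G, Lam (plen g)) /\
  plen (@gone G) = 0 /\
  (forall g : G, plen g = plen (ginv g)) /\
  (forall g h : G, plen (gmul g h) <= plen g + plen h).

Definition isometric_hom {G1 G2 : PNGrp} (f : G1 -> G2) : Prop :=
  is_hom f /\ forall h : G1, plen (f h) = plen h.

Definition is_rational (x : R) : Prop :=
  exists a b : Z, b <> 0%Z /\ x = IZR a / IZR b.

Definition good_Q (Lam : R -> Prop) (Q : list R) : Prop :=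
  In 0 Q /\ forall q, In q Q -> Lam q /\ is_rational q.

Definition almost_hom {G1 G2 : PNGrp} (D : list (gcar G1)) (Q : list R)
    (phi : G1 -> G2) : Prop :=
  (forall x y, In x D -> In y D -> phi x = phi y -> x = y) /\
  (forall h g, In h D -> In g D -> In (gmul h g) D ->
     phi (gmul h g) = gmul (phi h) (phi g)) /\
  (forall g q, In g D -> In q Q ->
     (plen g < q <-> plen (phi g) < q) /\
     (plen g = q <-> plen (phi g) = q) /\
     (plen g > q <-> plen (phi g) > q)).

Definition metrically_LE (Lam : R -> Prop) (C : PNGrp -> Prop) (G : PNGrp) : Prop :=
  forall (D : list (gcar G)) (Q : list R), good_Q Lam Q ->
    exists X : PNGrp, C X /\ exists phi : G -> X, almost_hom D Q phi.

Inductive gen {G : Grp} (S : list (gcar G)) : gcar G -> Prop :=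
| gen_one : gen S gone
| gen_in : forall x, In x S -> gen S x
| gen_mul : forall x y, gen S x -> gen S y -> gen S (gmul x y)
| gen_inv : forall x, gen S x -> gen S (ginv x).

Section SubGrp.
Variables (G : Grp) (S : list (gcar G)).
Definition sub_car := { x : gcar G | gen S x }.
Definition sub_mul (x y : sub_car) : sub_car :=
  exist _ (gmul (proj1_sig x) (proj1_sig y))
    (gen_mul S _ _ (proj2_sig x) (proj2_sig y)).
Definition sub_one : sub_car := exist _ gone (gen_one S).
Definition sub_inv (x : sub_car) : sub_car :=
  exist _ (ginv (proj1_sig x)) (gen_inv S _ (proj2_sig x)).
Lemma sub_eq (x y : sub_car) : proj1_sig x = proj1_sig y -> x = y.
Proof.
  destruct x as [x px], y as [y py]; simpl; intros ->.
  f_equal; apply proof_irrelevance.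
Qed.
Lemma sub_mulA x y z : sub_mul x (sub_mul y z) = sub_mul (sub_mul x y) z.
Proof. apply sub_eq; simpl; apply gmulA. Qed.
Lemma sub_mul1l x : sub_mul sub_one x = x.
Proof. apply sub_eq; simpl; apply gmul1l. Qed.
Lemma sub_mul1r x : sub_mul x sub_one = x.
Proof. apply sub_eq; simpl; apply gmul1r. Qed.
Lemma sub_mulVl x : sub_mul (sub_inv x) x = sub_one.
Proof. apply sub_eq; simpl; apply gmulVl. Qed.
Lemma sub_mulVr x : sub_mul x (sub_inv x) = sub_one.
Proof. apply sub_eq; simpl; apply gmulVr. Qed.
Definition SubGrp : Grp :=
  Build_Grp sub_car sub_mul sub_one sub_inv
    sub_mulA sub_mul1l sub_mul1r sub_mulVl sub_mulVr.
End SubGrp.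

Definition SubPN (G : PNGrp) (S : list (gcar G)) : PNGrp :=
  {| pgrp := SubGrp G S; plen := fun x => @plen G (proj1_sig x) |}.

(* phi_trans phi n k = phi_{n, k+n} = phi_{k+n-1} o ... o phi_n *)
Fixpoint phi_trans (L : nat -> PNGrp) (phi : forall n, L n -> L (S n))
    (n k : nat) : L n -> L (k + n)%nat :=
  match k return L n -> L (k + n)%nat with
  | O => fun x => x
  | S k' => fun x => phi (k' + n)%nat (phi_trans L phi n k' x)
  end.

Definition is_direct_limit (L : nat -> PNGrp) (phi : forall n, L n -> L (S n))
    (M : Grp) (psi : forall n, L n -> M) : Prop :=
  (forall n, is_hom (psi n)) /\
  (forall n k (x : L n), psi (k + n)%nat (phi_trans L phi n k x) = psi n x) /\
  (forall (H : Grp) (f : forall n, L n -> H),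
     (forall n, is_hom (f n)) ->
     (forall n k (x : L n), f (k + n)%nat (phi_trans L phi n k x) = f n x) ->
     exists g : M -> H, is_hom g /\ (forall n (x : L n), g (psi n x) = f n x) /\
       forall g' : M -> H, is_hom g' -> (forall n (x : L n), g' (psi n x) = f n x) ->
         forall y, g' y = g y).

(* Main.v *)
Require Import Defs.
From Stdlib Require Import Reals List Lia Arith ProofIrrelevance FunctionalExtensionality PropExtensionality ClassicalEpsilon Classical Peano_dec.
Open Scope R_scope.
Local Open Scope nat_scope.

Lemma g_cancel_idem (H : Grp) (z : H) : gmul z z = z -> z = gone.
Proof.
  intro E. assert (E2 : gmul (ginv z) (gmul z z) = gmul (ginv z) z) by (rewrite E; reflexivity).
  rewrite gmulA, gmulVl, gmul1l in E2. exact E2.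
Qed.

Lemma g_inv_unique (H : Grp) (x y : H) : gmul x y = gone -> y = ginv x.
Proof.
  intro E. rewrite <- (gmul1l H y). rewrite <- (gmulVl H x).
  rewrite <- gmulA, E, gmul1r. reflexivity.
Qed.

Lemma g_inv_one (H : Grp) : ginv (@gone H) = gone.
Proof. symmetry. apply g_inv_unique. apply gmul1l. Qed.

Lemma g_inv_inv (H : Grp) (x : H) : ginv (ginv x) = x.
Proof. symmetry. apply g_inv_unique. apply gmulVl. Qed.

Lemma g_inv_mul (H : Grp) (x y : H) : ginv (gmul x y) = gmul (ginv y) (ginv x).
Proof.
  symmetry. apply g_inv_unique.
  rewrite <- gmulA. rewrite (gmulA H y). rewrite gmulVr, gmul1l. apply gmulVr.
Qed.

Lemma hom_one (H K : Grp) (f : H -> K) : is_hom f -> f gone = gone.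
Proof.
  intro hf. apply g_cancel_idem. rewrite <- hf. rewrite gmul1l. reflexivity.
Qed.

Lemma hom_inv (H K : Grp) (f : H -> K) (x : H) : is_hom f -> f (ginv x) = ginv (f x).
Proof.
  intro hf. apply g_inv_unique. rewrite <- hf, gmulVr. apply hom_one; auto.
Qed.

Definition word := list (bool * nat).
Definition lettr {H : Grp} (a : nat -> gcar H) (l : bool * nat) : gcar H :=
  if fst l then a (snd l) else ginv (a (snd l)).
Definition evalw {H : Grp} (a : nat -> gcar H) (w : word) : gcar H :=
  fold_right (fun l acc => gmul (lettr a l) acc) gone w.
Definition invw (w : word) : word := rev (map (fun l => (negb (fst l), snd l)) w).

Lemma evalw_app (H : Grp) (a : nat -> gcar H) w v :
  evalw a (w ++ v) = gmul (evalw a w) (evalw a v).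
Proof.
  induction w as [|l w IH]; simpl.
  - rewrite gmul1l; reflexivity.
  - unfold evalw in *. simpl. rewrite IH, gmulA. reflexivity.
Qed.

Lemma evalw_invw (H : Grp) (a : nat -> gcar H) w :
  evalw a (invw w) = ginv (evalw a w).
Proof.
  induction w as [|[b i] w IH]; simpl.
  - unfold invw; simpl. symmetry; apply g_inv_one.
  - unfold invw in *. simpl. rewrite evalw_app, IH.
    unfold evalw at 2. simpl. rewrite gmul1r.
    change (fold_right (fun l acc => gmul (lettr a l) acc) gone w) with (evalw a w).
    rewrite g_inv_mul. f_equal. unfold lettr; destruct b; simpl; auto.
    symmetry; apply g_inv_inv.
Qed.

Section Quot.
Variable T : Type.
Variable mul : T -> T -> T.
Variable one : T.
Variable inv : T -> T.
Variable Rl : T -> T -> Prop.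
Hypothesis Rrefl : forall a, Rl a a.
Hypothesis Rsym : forall a b, Rl a b -> Rl b a.
Hypothesis Rtrans : forall a b c, Rl a b -> Rl b c -> Rl a c.
Hypothesis Rmul : forall a a' b b', Rl a a' -> Rl b b' -> Rl (mul a b) (mul a' b').
Hypothesis Rinv : forall a a', Rl a a' -> Rl (inv a) (inv a').
Hypothesis RA : forall a b c, Rl (mul a (mul b c)) (mul (mul a b) c).
Hypothesis R1l : forall a, Rl (mul one a) a.
Hypothesis R1r : forall a, Rl (mul a one) a.
Hypothesis RVl : forall a, Rl (mul (inv a) a) one.
Hypothesis RVr : forall a, Rl (mul a (inv a)) one.

Definition qcar := { P : T -> Prop | exists a, P = Rl a }.
Definition cls (a : T) : qcar := exist _ (Rl a) (ex_intro _ a eq_refl).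
Definition rep (c : qcar) : T :=
  proj1_sig (constructive_indefinite_description _ (proj2_sig c)).

Lemma qsig_ext (P Q : qcar) : proj1_sig P = proj1_sig Q -> P = Q.
Proof. destruct P, Q; simpl; intros ->; f_equal; apply proof_irrelevance. Qed.

Lemma cls_rep c : cls (rep c) = c.
Proof.
  destruct c as [P HP]. unfold rep. simpl.
  destruct (constructive_indefinite_description _ HP) as [a Ha]. simpl.
  unfold cls. subst P. f_equal. apply proof_irrelevance.
Qed.

Lemma cls_eq a b : Rl a b -> cls a = cls b.
Proof.
  intro H. unfold cls.
  assert (E : Rl a = Rl b).
  { apply functional_extensionality; intro v.
    apply propositional_extensionality; split; eauto. }
  apply qsig_ext. exact E.
Qed.

Lemma cls_inj a b : cls a = cls b -> Rl a b.
Proof.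
  intro H. apply (f_equal (@proj1_sig _ _)) in H. simpl in H.
  pose proof (f_equal (fun f => f b) H) as E. simpl in E. rewrite E. auto.
Qed.

Lemma rep_cls a : Rl (rep (cls a)) a.
Proof. apply cls_inj. apply cls_rep. Qed.

Definition qmul (c d : qcar) : qcar := cls (mul (rep c) (rep d)).
Definition qone : qcar := cls one.
Definition qinv (c : qcar) : qcar := cls (inv (rep c)).

Lemma qmul_cls a b : qmul (cls a) (cls b) = cls (mul a b).
Proof. unfold qmul. apply cls_eq. apply Rmul; apply rep_cls. Qed.
Lemma qinv_cls a : qinv (cls a) = cls (inv a).
Proof. unfold qinv. apply cls_eq. apply Rinv; apply rep_cls. Qed.

Lemma qmulA x y z : qmul x (qmul y z) = qmul (qmul x y) z.
Proof.
  rewrite <- (cls_rep x), <- (cls_rep y), <- (cls_rep z).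
  rewrite !qmul_cls. apply cls_eq. apply RA.
Qed.
Lemma qmul1l x : qmul qone x = x.
Proof. rewrite <- (cls_rep x). unfold qone. rewrite qmul_cls. apply cls_eq, R1l. Qed.
Lemma qmul1r x : qmul x qone = x.
Proof. rewrite <- (cls_rep x). unfold qone. rewrite qmul_cls. apply cls_eq, R1r. Qed.
Lemma qmulVl x : qmul (qinv x) x = qone.
Proof. rewrite <- (cls_rep x). rewrite qinv_cls, qmul_cls. apply cls_eq, RVl. Qed.
Lemma qmulVr x : qmul x (qinv x) = qone.
Proof. rewrite <- (cls_rep x). rewrite qinv_cls, qmul_cls. apply cls_eq, RVr. Qed.

Definition QGrp : Grp := Build_Grp qcar qmul qone qinv qmulA qmul1l qmul1r qmulVl qmulVr.
End Quot.


Definition toL (G : Grp) (Sg : list (gcar G)) (x : gcar G) : gcar (SubGrp G Sg) :=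
  match excluded_middle_informative (gen Sg x) with
  | left p => exist _ x p
  | right _ => sub_one G Sg
  end.

Lemma toL_val (G : Grp) Sg x : gen Sg x -> proj1_sig (toL G Sg x) = x.
Proof.
  intro p. unfold toL. destruct (excluded_middle_informative (gen Sg x)); simpl; tauto.
Qed.

Section Forward.
Variable Lam : R -> Prop.
Variable C : PNGrp -> Prop.
Variable G : PNGrp.
Variable Sg : list (gcar G).

Local Notation Mg := (pgrp (SubPN G Sg)).
Definition aL (i : nat) : gcar Mg := nth i (map (toL G Sg) Sg) (@gone Mg).

Fixpoint B (k : nat) : list (gcar Mg) :=
  match k with
  | 0 => gone :: map (toL G Sg) Sg
  | S k' => B k' ++ map ginv (B k') ++ map (fun p => gmul (fst p) (snd p)) (list_prod (B k') (B k'))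
  end.

Lemma B_mono k k' y : k <= k' -> In y (B k) -> In y (B k').
Proof. induction 1; auto. intro H'. simpl. apply in_or_app. left. auto. Qed.

Lemma B_one k : In gone (B k).
Proof. apply (B_mono 0); [lia| left; reflexivity]. Qed.

Lemma B_a i : In (aL i) (B 0).
Proof.
  unfold aL. destruct (Nat.lt_ge_cases i (length (map (toL G Sg) Sg))) as [h|h].
  - right. apply nth_In; auto.
  - rewrite nth_overflow by auto. left; reflexivity.
Qed.

Lemma B_inv k y : In y (B k) -> In (ginv y) (B (S k)).
Proof. intro h. simpl. apply in_or_app. right. apply in_or_app. left. apply in_map. auto. Qed.

Lemma B_mul k x y : In x (B k) -> In y (B k) -> In (gmul x y) (B (S k)).
Proof.
  intros hx hy. simpl. apply in_or_app. right. apply in_or_app. right.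
  apply (in_map (fun p => gmul (fst p) (snd p)) _ (x, y)). apply in_prod; auto.
Qed.

Lemma lettr_in l : In (lettr aL l) (B 1).
Proof.
  destruct l as [[|] i]; unfold lettr; simpl fst; simpl snd.
  - apply (B_mono 0); [lia|apply B_a].
  - apply B_inv, B_a.
Qed.

Lemma evalw_depth w : exists k, In (evalw aL w) (B k).
Proof.
  induction w as [|l w [k IH]].
  - exists 0. left. reflexivity.
  - exists (S (max 1 k)). apply B_mul.
    + apply (B_mono 1); [lia|apply lettr_in].
    + apply (B_mono k); [lia|exact IH].
Qed.

Lemma evalw_surj (y : gcar Mg) : exists w, evalw aL w = y.
Proof.
  destruct y as [x p].
  assert (A : exists w, proj1_sig (evalw aL w) = x).
  { induction p as [|x H|x y p1 IH1 p2 IH2|x p IH].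
    - exists nil. reflexivity.
    - destruct (In_nth _ _ x H) as [i [hi hx]].
      exists ((true, i) :: nil). unfold evalw; simpl.
      unfold lettr; simpl. unfold aL.
      rewrite (nth_indep _ _ (toL G Sg x)) by (rewrite length_map; auto).
      rewrite map_nth, hx. rewrite gmul1r. apply toL_val. apply gen_in; auto.
    - destruct IH1 as [w1 E1], IH2 as [w2 E2]. exists (w1 ++ w2).
      rewrite evalw_app. change (gmul (proj1_sig (evalw aL w1)) (proj1_sig (evalw aL w2)) = gmul x y).
      rewrite E1, E2. reflexivity.
    - destruct IH as [w E]. exists (invw w). rewrite evalw_invw. change (ginv (proj1_sig (evalw aL w)) = ginv x). rewrite E. reflexivity. }
  destruct A as [w E]. exists w. apply sub_eq. exact E.
Qed.

Lemma depth_all (y : gcar Mg) : exists k, In y (B k).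
Proof. destruct (evalw_surj y) as [w <-]. apply evalw_depth. Qed.

Definition Pj (n : nat) (X : PNGrp) (f : gcar Mg -> gcar X) (Q : list R) : Prop :=
  C X /\ good_Q Lam Q /\ exists k, n <= k /\ @almost_hom (SubPN G Sg) X (B k) Q f.

Lemma Pj_mono n m X f Q : n <= m -> Pj m X f Q -> Pj n X f Q.
Proof.
  intros h [h1 [h2 [k [hk h3]]]]. split; [|split]; auto. exists k. split; auto. lia.
Qed.

Lemma ah_one k Q (X : PNGrp) (f : gcar Mg -> gcar X) :
  @almost_hom (SubPN G Sg) X (B k) Q f -> f gone = gone.
Proof.
  intros [_ [hm _]]. apply g_cancel_idem.
  rewrite <- (hm gone gone); try apply B_one.
  - f_equal. apply (gmul1l Mg).
  - change (In (@gmul Mg gone gone) (B k)). rewrite gmul1l. apply B_one.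
Qed.

Lemma ah_inv k Q (X : PNGrp) (f : gcar Mg -> gcar X) x :
  @almost_hom (SubPN G Sg) X (B k) Q f -> In x (B k) -> In (ginv x) (B k) ->
  f (ginv x) = ginv (f x).
Proof.
  intros hah hx hix. apply g_inv_unique.
  destruct hah as [h0 [hm h2]].
  rewrite <- (hm x (ginv x)); auto.
  - change (f (@gmul Mg x (ginv x)) = gone). rewrite gmulVr.
    apply (ah_one k Q). split; auto.
  - change (In (@gmul Mg x (ginv x)) (B k)). rewrite gmulVr. apply B_one.
Qed.

Lemma claim w : exists m, forall X f Q, Pj m X f Q ->
  evalw (H := X) (fun i => f (aL i)) w = f (evalw aL w).
Proof.
  induction w as [|[b i] w [m0 IH]].
  - exists 0. intros X f Q [_ [_ [k [_ hah]]]]. symmetry. apply (ah_one k Q). auto.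
  - destruct (evalw_depth w) as [d hd].
    exists (max m0 (S (max 1 d))). intros X f Q hP.
    pose proof hP as [_ [_ [k [hk hah]]]].
    assert (hlv : In (lettr aL (b, i)) (B k)) by (apply (B_mono 1); [lia|apply lettr_in]).
    assert (hy : In (evalw aL w) (B k)) by (apply (B_mono d); [lia|auto]).
    assert (hp : In (gmul (lettr aL (b, i)) (evalw aL w)) (B k)).
    { apply (B_mono (S (max 1 d))); [lia|]. apply B_mul.
      - apply (B_mono 1); [lia|apply lettr_in].
      - apply (B_mono d); [lia|auto]. }
    change (gmul (lettr (H := X) (fun i => f (aL i)) (b, i)) (evalw (H := X) (fun i => f (aL i)) w)
      = f (gmul (lettr aL (b, i)) (evalw aL w))).
    destruct hah as [h0 [hm h2]].
    rewrite (hm _ _ hlv hy hp).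
    rewrite (IH X f Q) by (apply (Pj_mono _ _ _ _ _ (Nat.le_max_l _ _) hP)).
    f_equal. destruct b; unfold lettr; simpl; auto.
    symmetry. apply (ah_inv k Q); [split; auto| |].
    + apply (B_mono 0); [lia|apply B_a].
    + apply (B_mono 1); [lia|]. apply B_inv, B_a.
Qed.

Definition eqv (n : nat) (w v : word) : Prop :=
  evalw aL w = evalw aL v /\
  forall X f Q, Pj n X f Q ->
    evalw (H := X) (fun i => f (aL i)) w = evalw (H := X) (fun i => f (aL i)) v.

Lemma eqv_gen n w v : (forall (H : Grp) (a : nat -> gcar H), evalw a w = evalw a v) -> eqv n w v.
Proof. intro h. split; [apply h|]. intros. apply h. Qed.

Lemma eqv_refl n w : eqv n w w.
Proof. apply eqv_gen; auto. Qed.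
Lemma eqv_sym n w v : eqv n w v -> eqv n v w.
Proof. intros [h1 h2]; split; [auto|]. intros X f Q hP; symmetry; apply (h2 X f Q hP). Qed.
Lemma eqv_trans n u w v : eqv n u w -> eqv n w v -> eqv n u v.
Proof. intros [h1 h2] [h3 h4]; split; [congruence|]. intros X f Q hP. rewrite (h2 X f Q hP). apply (h4 X f Q hP). Qed.
Lemma eqv_app n a a' b b' : eqv n a a' -> eqv n b b' -> eqv n (a ++ b) (a' ++ b').
Proof.
  intros [h1 h2] [h3 h4]; split.
  - rewrite !evalw_app; congruence.
  - intros X f Q hP. rewrite !evalw_app. rewrite (h2 X f Q hP), (h4 X f Q hP). reflexivity.
Qed.
Lemma eqv_inv n a a' : eqv n a a' -> eqv n (invw a) (invw a').
Proof.
  intros [h1 h2]; split.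
  - rewrite !evalw_invw; congruence.
  - intros X f Q hP. rewrite !evalw_invw. rewrite (h2 X f Q hP). reflexivity.
Qed.
Lemma eqvA n a b c : eqv n (a ++ (b ++ c)) ((a ++ b) ++ c).
Proof. rewrite app_assoc. apply eqv_refl. Qed.
Lemma eqv1l n a : eqv n (nil ++ a) a.
Proof. apply eqv_refl. Qed.
Lemma eqv1r n a : eqv n (a ++ nil) a.
Proof. rewrite app_nil_r. apply eqv_refl. Qed.
Lemma eqvVl n a : eqv n (invw a ++ a) nil.
Proof. apply eqv_gen. intros. rewrite evalw_app, evalw_invw, gmulVl. reflexivity. Qed.
Lemma eqvVr n a : eqv n (a ++ invw a) nil.
Proof. apply eqv_gen. intros. rewrite evalw_app, evalw_invw, gmulVr. reflexivity. Qed.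
Lemma eqv_mono n m w v : n <= m -> eqv n w v -> eqv m w v.
Proof.
  intros h [h1 h2]; split; auto. intros X f Q hP. apply (h2 X f Q). apply (Pj_mono n m); auto.
Qed.

Definition Ln (n : nat) : Grp :=
  QGrp word (@app _) nil invw (eqv n) (eqv_refl n) (eqv_sym n) (eqv_trans n)
    (eqv_app n) (eqv_inv n) (eqvA n) (eqv1l n) (eqv1r n) (eqvVl n) (eqvVr n).

Definition clsL (n : nat) (w : word) : gcar (Ln n) := cls word (eqv n) w.
Definition repL (n : nat) (c : gcar (Ln n)) : word := rep word (eqv n) c.

Lemma clsL_rep n c : clsL n (repL n c) = c.
Proof. apply cls_rep. Qed.
Lemma clsL_eq n w v : eqv n w v -> clsL n w = clsL n v.
Proof. apply cls_eq; [apply eqv_sym|apply eqv_trans]. Qed.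
Lemma clsL_inj n w v : clsL n w = clsL n v -> eqv n w v.
Proof. apply cls_inj; apply eqv_refl. Qed.
Lemma repL_cls n w : eqv n (repL n (clsL n w)) w.
Proof. apply rep_cls; apply eqv_refl. Qed.
Lemma clsL_mul n w v : gmul (clsL n w) (clsL n v) = clsL n (w ++ v).
Proof.
  apply (qmul_cls word (@app _) (eqv n) (eqv_refl n) (eqv_sym n) (eqv_trans n) (eqv_app n)).
Qed.
Lemma clsL_one n : @gone (Ln n) = clsL n nil.
Proof. reflexivity. Qed.

Definition psiL (n : nat) (c : gcar (Ln n)) : gcar Mg := evalw aL (repL n c).

Definition LPN (n : nat) : PNGrp :=
  Build_PNGrp (Ln n) (fun c => @plen G (proj1_sig (psiL n c))).

Definition phiL (n : nat) (c : gcar (LPN n)) : gcar (LPN (S n)) := clsL (S n) (repL n c).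

Definition hj (n : nat) (X : PNGrp) (f : gcar Mg -> gcar X) (c : gcar (LPN n)) : gcar X :=
  evalw (H := X) (fun i => f (aL i)) (repL n c).

Lemma psiL_cls n w : psiL n (clsL n w) = evalw aL w.
Proof. unfold psiL. apply (repL_cls n w). Qed.

Lemma psiL_hom n : is_hom (psiL n).
Proof.
  intros c d. rewrite <- (clsL_rep n c), <- (clsL_rep n d).
  rewrite clsL_mul, !psiL_cls, evalw_app. reflexivity.
Qed.

Lemma hj_cls n X f Q w : Pj n X f Q -> hj n X f (clsL n w) = evalw (H := X) (fun i => f (aL i)) w.
Proof. intro hP. unfold hj. apply (proj2 (repL_cls n w) X f Q hP). Qed.

Lemma hj_hom n X f Q : Pj n X f Q -> is_hom (hj n X f).
Proof.
  intros hP c d. rewrite <- (clsL_rep n c), <- (clsL_rep n d).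
  change (@gmul (pgrp (LPN n))) with (@gmul (Ln n)).
  rewrite clsL_mul, !(hj_cls n X f Q) by auto. rewrite evalw_app. reflexivity.
Qed.

Lemma phiL_hom n : is_hom (phiL n).
Proof.
  intros c d. rewrite <- (clsL_rep n c), <- (clsL_rep n d).
  change (@gmul (pgrp (LPN n))) with (@gmul (Ln n)).
  change (@gmul (pgrp (LPN (S n)))) with (@gmul (Ln (S n))).
  rewrite clsL_mul. unfold phiL. rewrite clsL_mul. apply clsL_eq.
  apply (eqv_trans _ _ (repL n c ++ repL n d)).
  - apply (eqv_mono n); [lia|]. apply repL_cls.
  - apply eqv_app; apply eqv_sym; apply (eqv_mono n); try lia; apply repL_cls.
Qed.

Lemma psiL_phiL n c : psiL (S n) (phiL n c) = psiL n c.
Proof. unfold phiL. rewrite psiL_cls. reflexivity. Qed.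

Lemma phi_trans_eqv n k c :
  eqv (k + n) (repL (k + n) (phi_trans LPN phiL n k c)) (repL n c).
Proof.
  induction k as [|k IH]; simpl.
  - apply eqv_refl.
  - unfold phiL. eapply eqv_trans; [apply repL_cls|].
    apply (eqv_mono (k + n)); [lia|exact IH].
Qed.

Lemma eqv_evalL w v : evalw aL w = evalw aL v -> exists m, forall m', m <= m' -> eqv m' w v.
Proof.
  intro E. destruct (claim w) as [m1 h1], (claim v) as [m2 h2].
  exists (max m1 m2). intros m' hm. split; auto.
  intros X f Q hP. rewrite (h1 X f Q), (h2 X f Q), E; auto;
    apply (Pj_mono _ m'); auto; lia.
Qed.

Lemma ah_transfer (D : list (gcar Mg)) Q (X : PNGrp) (psi : gcar G -> gcar X) :
  @almost_hom G X (map (@proj1_sig _ _) D) Q psi ->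
  @almost_hom (SubPN G Sg) X D Q (fun y => psi (proj1_sig y)).
Proof.
  intros [h1 [h2 h3]]. split; [|split].
  - intros x y hx hy E. apply sub_eq. apply h1; auto; apply in_map; auto.
  - intros h g hh hg hhg. apply (h2 (proj1_sig h) (proj1_sig g)); try apply in_map; auto.
    apply (in_map (@proj1_sig _ _)) in hhg. exact hhg.
  - intros g q hg hq. apply (h3 (proj1_sig g) q); auto. apply in_map; auto.
Qed.

Lemma fin_max (A : Type) (P : A -> nat -> Prop) (l : list A) :
  (forall a m m', P a m -> m <= m' -> P a m') ->
  (forall a, In a l -> exists m, P a m) -> exists M, forall a, In a l -> P a M.
Proof.
  intros hmono h. induction l as [|a l IH].
  - exists 0. intros a [].
  - destruct IH as [M1 hM1]. { intros; apply h; right; auto. }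
    destruct (h a (or_introl eq_refl)) as [M2 hM2].
    exists (max M1 M2). intros b [<-|hb].
    + apply (hmono _ M2); auto; lia.
    + apply (hmono _ M1); auto; lia.
Qed.


Lemma fcls (H : Grp) (f : forall n, gcar (LPN n) -> gcar H)
  (hc : forall n k (x : LPN n), f (k + n) (phi_trans LPN phiL n k x) = f n x) n w :
  f n (clsL n w) = f 0 (clsL 0 w).
Proof.
  pose proof (hc 0 n (clsL 0 w)) as E.
  assert (E2 : phi_trans LPN phiL 0 n (clsL 0 w) = clsL (n + 0) w).
  { rewrite <- (clsL_rep _ (phi_trans LPN phiL 0 n (clsL 0 w))). apply clsL_eq.
    eapply eqv_trans; [apply phi_trans_eqv|]. apply (eqv_mono 0); [lia|]. apply repL_cls. }
  rewrite E2 in E. rewrite Nat.add_0_r in E. exact E.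
Qed.

Lemma dl : is_direct_limit LPN phiL (SubPN G Sg) psiL.
Proof.
  split; [|split].
  - intro n. apply psiL_hom.
  - intros n k x. unfold psiL at 1. apply (proj1 (phi_trans_eqv n k x)).
  - intros H f hf hc.
    assert (fwell : forall w v, evalw aL w = evalw aL v -> f 0 (clsL 0 w) = f 0 (clsL 0 v)).
    { intros w v E. destruct (eqv_evalL w v E) as [m hm].
      rewrite <- (fcls H f hc m w), <- (fcls H f hc m v). f_equal. apply clsL_eq. apply hm; lia. }
    set (wof := fun y : gcar Mg => proj1_sig (constructive_indefinite_description _ (evalw_surj y))).
    assert (hwof : forall y, evalw aL (wof y) = y).
    { intro y. unfold wof. destruct (constructive_indefinite_description _ _); simpl; auto. }
    exists (fun y => f 0 (clsL 0 (wof y))). split; [|split].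
    + intros x y. rewrite <- hf. change (@gmul (pgrp (LPN 0))) with (@gmul (Ln 0)).
      rewrite clsL_mul. apply fwell. rewrite evalw_app, !hwof. reflexivity.
    + intros n x. rewrite <- (clsL_rep n x) at 2. rewrite (fcls H f hc n).
      apply fwell. rewrite hwof. reflexivity.
    + intros g' hg' hfg y. rewrite <- (hwof y) at 1. rewrite <- (psiL_cls 0 (wof y)).
      apply hfg.
Qed.

Hypothesis HLam0 : Lam 0%R.
Hypothesis HG : pseudo_norm Lam G.
Hypothesis HLE : metrically_LE Lam C G.

Lemma good_Q0 : good_Q Lam (0%R :: nil).
Proof.
  split; [left; reflexivity|]. intros q [<-|[]]. split; auto.
  exists 0%Z, 1%Z. split; [discriminate|]. simpl. unfold Rdiv. rewrite Rmult_0_l. reflexivity.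
Qed.

Lemma forward_main :
     exists (L : nat -> PNGrp) (phi : forall n, L n -> L (S n))
            (psi : forall n, L n -> SubPN G Sg),
       (forall n, pseudo_norm Lam (L n)) /\
       (forall n, isometric_hom (phi n)) /\
       (forall n, isometric_hom (psi n)) /\
       (forall n (x : L n), psi (S n) (phi n x) = psi n x) /\
       is_direct_limit L phi (SubPN G Sg) psi /\
       (forall n (Q : list R) (E : list (gcar (L n))),
          good_Q Lam Q ->
          (forall x y, In x E -> In y E -> psi n x = psi n y -> x = y) ->
          exists X : PNGrp, C X /\
            exists h : L n -> X, is_hom h /\ almost_hom E Q h) /\
       (forall n (g : L n), g <> gone ->
          exists X : PNGrp, C X /\
            exists h : L n -> X, is_hom h /\ h g <> gone).
Proof.
  exists LPN, phiL, psiL.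
  split; [|split; [|split; [|split; [|split; [|split]]]]].
  -
    intro n. destruct HG as [hl [h0 [hi ht]]]. split; [|split; [|split]].
    + intro g. apply hl.
    + assert (E : psiL n gone = gone) by (apply hom_one, psiL_hom).
      change (@plen G (proj1_sig (psiL n gone)) = 0%R). rewrite E. exact h0.
    + intro g. change (@plen G (proj1_sig (psiL n g)) = @plen G (proj1_sig (psiL n (ginv g)))).
      rewrite (hom_inv _ _ _ _ (psiL_hom n)). apply hi.
    + intros g h. change (@plen G (proj1_sig (psiL n (gmul g h))) <=
        @plen G (proj1_sig (psiL n g)) + @plen G (proj1_sig (psiL n h)))%R.
      rewrite (psiL_hom n). apply ht.
  - intro n. split; [apply phiL_hom|]. intro h.
    change (@plen G (proj1_sig (psiL (S n) (phiL n h))) = @plen G (proj1_sig (psiL n h))).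
    rewrite psiL_phiL. reflexivity.
  - intro n. split; [apply psiL_hom|]. intro h. reflexivity.
  - intros n x. apply psiL_phiL.
  - apply dl.
  -
    intros n Q E hQ hinj.
    set (Pr := fun (c : gcar (LPN n)) m =>
      (forall X f Q', Pj m X f Q' ->
         evalw (H := X) (fun i => f (aL i)) (repL n c) = f (evalw aL (repL n c))) /\
      In (psiL n c) (B m)).
    destruct (fin_max _ Pr E) as [M hM].
    { intros a m m' [h1 h2] hm. split.
      - intros X f Q' hP. apply (h1 X f Q'). apply (Pj_mono _ m'); auto.
      - apply (B_mono m); auto. }
    { intros a _. destruct (claim (repL n a)) as [m1 h1], (depth_all (psiL n a)) as [m2 h2].
      exists (max m1 m2). split.
      - intros X f Q' hP. apply (h1 X f Q'). apply (Pj_mono _ (max m1 m2)); auto; lia.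
      - apply (B_mono m2); auto; lia. }
    set (K := max M n).
    destruct (HLE (map (@proj1_sig _ _) (B K)) Q hQ) as [X [hCX [ps hps]]].
    pose proof (ah_transfer (B K) Q X ps hps) as hah.
    set (f := fun y : gcar Mg => ps (proj1_sig y)) in hah.
    assert (hPK : Pj K X f Q) by (split; [|split]; auto; exists K; split; auto).
    assert (hPn : Pj n X f Q) by (apply (Pj_mono n K); auto; unfold K; lia).
    assert (hPM : Pj M X f Q) by (apply (Pj_mono M K); auto; unfold K; lia).
    assert (hval : forall c, In c E -> hj n X f c = f (psiL n c)).
    { intros c hc. apply (proj1 (hM c hc) X f Q hPM). }
    assert (hin : forall c, In c E -> In (psiL n c) (B K)).
    { intros c hc. apply (B_mono M); [unfold K; lia|]. apply (proj2 (hM c hc)). }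
    exists X. split; auto. exists (hj n X f). split; [apply (hj_hom n X f Q hPn)|].
    destruct hah as [a1 [a2 a3]]. split; [|split].
    + intros x y hx hy Exy. apply hinj; auto. apply a1; try apply hin; auto.
      rewrite <- !hval; auto.
    + intros h g _ _ _. apply (hj_hom n X f Q hPn).
    + intros g q hg hq. rewrite (hval g hg). apply (a3 (psiL n g) q); auto.
  -
    intros n c hc. apply NNPP. intro hno.
    assert (hall : forall X f Q, Pj n X f Q -> hj n X f c = gone).
    { intros X f Q hP. apply NNPP. intro hne. apply hno. exists X. split; [apply hP|].
      exists (hj n X f). split; auto. apply (hj_hom n X f Q hP). }
    set (w := repL n c).
    assert (hy : evalw aL w = gone).
    { apply NNPP. intro hne.
      destruct (claim w) as [m1 h1], (depth_all (evalw aL w)) as [m2 h2].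
      set (K := max (max m1 m2) n).
      destruct (HLE (map (@proj1_sig _ _) (B K)) (0%R :: nil) good_Q0) as [X [hCX [ps hps]]].
      pose proof (ah_transfer (B K) _ X ps hps) as hah.
      set (f := fun y : gcar Mg => ps (proj1_sig y)) in hah.
      assert (hPK : Pj K X f (0%R :: nil)) by (split; [|split]; auto; [apply good_Q0|]; exists K; split; auto).
      assert (E1 : hj n X f c = f (evalw aL w)).
      { apply (h1 X f (0%R :: nil)). apply (Pj_mono _ K); auto; unfold K; lia. }
      rewrite (hall X f (0%R :: nil)) in E1 by (apply (Pj_mono _ K); auto; unfold K; lia).
      pose proof (ah_one K _ X f hah) as E0.
      assert (E3 : f gone = f (evalw aL w)) by congruence.
      destruct hah as [a1 _]. apply hne. symmetry. apply a1; auto.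
      - apply B_one.
      - apply (B_mono m2); auto. unfold K; lia. }
    apply hc. rewrite <- (clsL_rep n c). change (@gone (pgrp (LPN n))) with (clsL n nil).
    apply clsL_eq. split.
    + fold w. rewrite hy. reflexivity.
    + intros X f Q hP. exact (hall X f Q hP).
Qed.

End Forward.


Section SubP.
Variable H : Grp.
Variable P : gcar H -> Prop.
Hypothesis P1 : P gone.
Hypothesis Pmul : forall x y, P x -> P y -> P (gmul x y).
Hypothesis Pinv : forall x, P x -> P (ginv x).
Definition spcar := { x : gcar H | P x }.
Lemma sp_eq (x y : spcar) : proj1_sig x = proj1_sig y -> x = y.
Proof. destruct x, y; simpl; intros ->; f_equal; apply proof_irrelevance. Qed.
Definition sp_mul (x y : spcar) : spcar := exist _ (gmul (proj1_sig x) (proj1_sig y)) (Pmul _ _ (proj2_sig x) (proj2_sig y)).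
Definition sp_one : spcar := exist _ gone P1.
Definition sp_inv (x : spcar) : spcar := exist _ (ginv (proj1_sig x)) (Pinv _ (proj2_sig x)).
Lemma sp_mulA x y z : sp_mul x (sp_mul y z) = sp_mul (sp_mul x y) z.
Proof. apply sp_eq; simpl; apply gmulA. Qed.
Lemma sp_mul1l x : sp_mul sp_one x = x.
Proof. apply sp_eq; simpl; apply gmul1l. Qed.
Lemma sp_mul1r x : sp_mul x sp_one = x.
Proof. apply sp_eq; simpl; apply gmul1r. Qed.
Lemma sp_mulVl x : sp_mul (sp_inv x) x = sp_one.
Proof. apply sp_eq; simpl; apply gmulVl. Qed.
Lemma sp_mulVr x : sp_mul x (sp_inv x) = sp_one.
Proof. apply sp_eq; simpl; apply gmulVr. Qed.
Definition SPGrp : Grp := Build_Grp spcar sp_mul sp_one sp_inv sp_mulA sp_mul1l sp_mul1r sp_mulVl sp_mulVr.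
End SubP.

Section Backward.
Variable L : nat -> PNGrp.
Variable phi : forall n, L n -> L (S n).
Variable Mgrp : Grp.
Variable psi : forall n, L n -> Mgrp.
Hypothesis hphi : forall n, is_hom (phi n).
Hypothesis hstep : forall n x, psi (S n) (phi n x) = psi n x.
Hypothesis hdl : is_direct_limit L phi Mgrp psi.

Fixpoint phi_to (n : nat) (x : gcar (L n)) (m : nat) : gcar (L m) :=
  match m with
  | 0 => match Nat.eq_dec n 0 with
         | left e => eq_rect n (fun k => gcar (L k)) x 0 e
         | right _ => gone
         end
  | S m' => match Nat.eq_dec n (S m') with
            | left e => eq_rect n (fun k => gcar (L k)) x (S m') e
            | right _ => phi m' (phi_to n x m')
            end
  end.

Lemma phi_to_S n x m : n <> S m -> phi_to n x (S m) = phi m (phi_to n x m).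
Proof. intro h. simpl. destruct (Nat.eq_dec n (S m)); [contradiction|reflexivity]. Qed.

Lemma phi_to_self n x : phi_to n x n = x.
Proof.
  destruct n; unfold phi_to.
  - destruct (Nat.eq_dec 0 0) as [e|e]; [|contradiction].
    rewrite (UIP_nat _ _ e eq_refl). reflexivity.
  - fold phi_to. destruct (Nat.eq_dec (S n) (S n)) as [e|e]; [|contradiction].
    rewrite (UIP_nat _ _ e eq_refl). reflexivity.
Qed.

Lemma phi_to_trans n x k : phi_to n x (k + n) = phi_trans L phi n k x.
Proof.
  induction k as [|k IH].
  - apply phi_to_self.
  - change (phi_to n x (S (k + n)) = phi (k + n) (phi_trans L phi n k x)).
    rewrite phi_to_S by lia. rewrite IH. reflexivity.
Qed.

Lemma phi_to_hom n m : is_hom (fun x => phi_to n x m).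
Proof.
  intros x y. induction m as [|m IH]; simpl.
  - destruct (Nat.eq_dec n 0) as [e|e].
    + subst n. reflexivity.
    + symmetry. apply gmul1l.
  - destruct (Nat.eq_dec n (S m)) as [e|e].
    + subst n. reflexivity.
    + rewrite IH. apply hphi.
Qed.

Lemma psi_phi_to n x m : n <= m -> psi m (phi_to n x m) = psi n x.
Proof.
  induction 1 as [|m h IH].
  - rewrite phi_to_self. reflexivity.
  - rewrite phi_to_S by lia. rewrite hstep. exact IH.
Qed.

Lemma psi_hom n : is_hom (psi n).
Proof. destruct hdl as [h _]. apply h. Qed.

Definition RT := forall m, gcar (L m).
Definition rmul (s t : RT) : RT := fun m => gmul (s m) (t m).
Definition rone : RT := fun m => gone.
Definition rinv (s : RT) : RT := fun m => ginv (s m).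
Definition Rev (s t : RT) : Prop := exists N, forall m, N <= m -> s m = t m.

Lemma Rev_refl s : Rev s s.
Proof. exists 0; auto. Qed.
Lemma Rev_sym s t : Rev s t -> Rev t s.
Proof. intros [N h]; exists N; intros; symmetry; auto. Qed.
Lemma Rev_trans s t u : Rev s t -> Rev t u -> Rev s u.
Proof. intros [N h] [N' h']; exists (max N N'); intros. rewrite h, h'; auto; lia. Qed.
Lemma Rev_mul a a' b b' : Rev a a' -> Rev b b' -> Rev (rmul a b) (rmul a' b').
Proof. intros [N h] [N' h']; exists (max N N'); intros. unfold rmul. rewrite h, h'; auto; lia. Qed.
Lemma Rev_inv a a' : Rev a a' -> Rev (rinv a) (rinv a').
Proof. intros [N h]; exists N; intros. unfold rinv. rewrite h; auto. Qed.
Lemma RevA a b c : Rev (rmul a (rmul b c)) (rmul (rmul a b) c).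
Proof. exists 0; intros; unfold rmul; apply gmulA. Qed.
Lemma Rev1l a : Rev (rmul rone a) a.
Proof. exists 0; intros; unfold rmul, rone; apply gmul1l. Qed.
Lemma Rev1r a : Rev (rmul a rone) a.
Proof. exists 0; intros; unfold rmul, rone; apply gmul1r. Qed.
Lemma RevVl a : Rev (rmul (rinv a) a) rone.
Proof. exists 0; intros; unfold rmul, rone, rinv; apply gmulVl. Qed.
Lemma RevVr a : Rev (rmul a (rinv a)) rone.
Proof. exists 0; intros; unfold rmul, rone, rinv; apply gmulVr. Qed.

Definition RPG : Grp := QGrp RT rmul rone rinv Rev Rev_refl Rev_sym Rev_trans Rev_mul Rev_inv
  RevA Rev1l Rev1r RevVl RevVr.

Definition fcone (n : nat) (x : L n) : gcar RPG := cls RT Rev (fun m => phi_to n x m).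

Lemma dl_inj n x x' : psi n x = psi n x' -> exists m, n <= m /\ phi_to n x m = phi_to n x' m.
Proof.
  intro E. destruct hdl as [_ [_ hu]].
  destruct (hu RPG fcone) as [g [hg [hgf _]]].
  - intros k a b. unfold fcone.
    symmetry. etransitivity; [apply (qmul_cls RT rmul Rev Rev_refl Rev_sym Rev_trans Rev_mul)|].
    apply cls_eq; [apply Rev_sym|apply Rev_trans|]. exists 0. intros m _.
    unfold rmul. symmetry. apply (phi_to_hom k m).
  - intros k j a. unfold fcone. apply cls_eq; [apply Rev_sym|apply Rev_trans|].
    exists (j + k). intros m hm. induction hm as [|m hm IH].
    + rewrite phi_to_self, phi_to_trans. reflexivity.
    + rewrite !phi_to_S by lia. rewrite IH. reflexivity.
  - assert (F : fcone n x = fcone n x') by (rewrite <- !hgf; congruence).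
    apply cls_inj in F; [|apply Rev_refl]. destruct F as [N hN].
    exists (max N n). split; [lia|]. apply hN; lia.
Qed.

Definition Pu (y : gcar Mgrp) : Prop := exists n x, psi n x = y.
Lemma Pu1 : Pu gone.
Proof. exists 0, gone. apply hom_one, psi_hom. Qed.
Lemma Pu_mul x y : Pu x -> Pu y -> Pu (gmul x y).
Proof.
  intros [n [a <-]] [m [b <-]]. exists (n + m), (gmul (phi_to n a (n + m)) (phi_to m b (n + m))).
  rewrite psi_hom, !psi_phi_to by lia. reflexivity.
Qed.
Lemma Pu_inv x : Pu x -> Pu (ginv x).
Proof. intros [n [a <-]]. exists n, (ginv a). apply hom_inv, psi_hom. Qed.

Definition UG : Grp := SPGrp Mgrp Pu Pu1 Pu_mul Pu_inv.

Lemma dl_surj y : exists n x, psi n x = y.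
Proof.
  pose proof hdl as [_ [hc hu]].
  set (fU := fun n (x : L n) => (exist _ (psi n x) (ex_intro _ n (ex_intro _ x eq_refl)) : gcar UG)).
  destruct (hu UG fU) as [gU [hgU [hgUf _]]].
  - intros n a b. apply (sp_eq Mgrp Pu). simpl. apply psi_hom.
  - intros n k a. apply (sp_eq Mgrp Pu). simpl. apply hc.
  - destruct (hu Mgrp psi psi_hom hc) as [g0 [_ [_ huniq]]].
    assert (E1 : (fun y => proj1_sig (gU y)) y = g0 y).
    { apply (huniq (fun y => proj1_sig (gU y))).
      - intros a b. rewrite hgU. reflexivity.
      - intros n x. rewrite hgUf. reflexivity. }
    assert (E2 : (fun y : gcar Mgrp => y) y = g0 y).
    { apply (huniq (fun y => y)).
      - intros a b. reflexivity.
      - intros n x. reflexivity. }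
    simpl in E1, E2. pose proof (proj2_sig (gU y)) as hp. simpl in hp.
    rewrite E1, <- E2 in hp. exact hp.
Qed.
End Backward.

Lemma phi_to_comp (L : nat -> PNGrp) (phi : forall n, L n -> L (S n)) n x m m' :
  n <= m -> m <= m' -> phi_to L phi n x m' = phi_to L phi m (phi_to L phi n x m) m'.
Proof.
  intros h1 h2. induction h2 as [|m' h IH].
  - rewrite phi_to_self. reflexivity.
  - rewrite !phi_to_S by lia. rewrite IH. reflexivity.
Qed.

Open Scope R_scope.

Theorem mainTheorem19 (Lam : R -> Prop) (C : PNGrp -> Prop) (G : PNGrp)
  (HLam : admissible_Lambda Lam)
  (HC : forall X, C X -> pseudo_norm Lam X)
  (HG : pseudo_norm Lam G) :
  metrically_LE Lam C G <->
  (forall Sg : list (gcar G),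
     exists (L : nat -> PNGrp) (phi : forall n, L n -> L (S n))
            (psi : forall n, L n -> SubPN G Sg),
       (forall n, pseudo_norm Lam (L n)) /\
       (forall n, isometric_hom (phi n)) /\
       (* (i) *)
       (forall n, isometric_hom (psi n)) /\
       (forall n (x : L n), psi (S n) (phi n x) = psi n x) /\
       is_direct_limit L phi (SubPN G Sg) psi /\
       (* (ii) *)
       (forall n (Q : list R) (E : list (gcar (L n))),
          good_Q Lam Q ->
          (forall x y, In x E -> In y E -> psi n x = psi n y -> x = y) ->
          exists X : PNGrp, C X /\
            exists h : L n -> X, is_hom h /\ almost_hom E Q h) /\
       (* (iii) *)
       (forall n (g : L n), g <> gone ->
          exists X : PNGrp, C X /\
            exists h : L n -> X, is_hom h /\ h g <> gone)).
Proof.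
  split.
  - intros HLE Sg. apply forward_main; auto. apply (proj1 HLam).
  - intros H2 D Q hQ.
    destruct (H2 D) as [L [phi [psi [hpn [hphi [hpsi [hstep [hdl [hii hiii]]]]]]]]].
    assert (hphih : forall n, is_hom (phi n)) by (intro n; apply (proj1 (hphi n))).
    assert (htoL : forall d, In d D -> proj1_sig (toL G D d) = d).
    { intros d hd. apply toL_val. apply gen_in; auto. }
    destruct (fin_max _ (fun d N => exists e : L N, psi N e = toL G D d) D) as [N hN].
    { intros a m m' [e he] hm. exists (phi_to L phi m e m').
      rewrite (psi_phi_to L phi _ psi hstep); auto. }
    { intros a _. apply (dl_surj L phi _ psi hstep hdl). }
    set (lift0 := fun g : gcar G =>
      match excluded_middle_informative (exists e : L N, psi N e = toL G D g) with
      | left p => proj1_sig (constructive_indefinite_description _ p)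
      | right _ => gone
      end).
    assert (hlift0 : forall d, In d D -> psi N (lift0 d) = toL G D d).
    { intros d hd. unfold lift0.
      destruct (excluded_middle_informative _) as [p|p].
      - destruct (constructive_indefinite_description _ p); simpl; auto.
      - exfalso. apply p. apply hN; auto. }
    destruct (fin_max _ (fun (p : gcar G * gcar G) m => (N <= m)%nat /\
        (In (gmul (fst p) (snd p)) D -> In (fst p) D -> In (snd p) D ->
         phi_to L phi N (gmul (lift0 (fst p)) (lift0 (snd p))) m =
         phi_to L phi N (lift0 (gmul (fst p) (snd p))) m)) (list_prod D D)) as [N' hN'].
    { intros a m m' [h1 h2] hm. split; [lia|]. intros i1 i2 i3.
      rewrite (phi_to_comp L phi N _ m m'), (phi_to_comp L phi N (lift0 _) m m') by lia.
      rewrite h2; auto. }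
    { intros [d1 d2] _. simpl.
      destruct (classic (In (gmul d1 d2) D /\ In d1 D /\ In d2 D)) as [[h1 [h2 h3]]|hn].
      - assert (E : psi N (gmul (lift0 d1) (lift0 d2)) = psi N (lift0 (gmul d1 d2))).
        { destruct hdl as [hh _]. rewrite hh, !hlift0; auto. apply sub_eq.
          change (gmul (proj1_sig (toL G D d1)) (proj1_sig (toL G D d2)) = proj1_sig (toL G D (gmul d1 d2))).
          rewrite !htoL; auto. }
        destruct (dl_inj L phi _ psi hphih hdl N _ _ E) as [m [hm1 hm2]].
        exists m. split; auto.
      - exists N. split; auto. intros. exfalso; apply hn; auto. }
    set (K := max N N').
    set (lift := fun g => phi_to L phi N (lift0 g) K).
    assert (hlift : forall d, In d D -> psi K (lift d) = toL G D d).
    { intros d hd. unfold lift. rewrite (psi_phi_to L phi _ psi hstep) by (unfold K; lia). auto. }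
    assert (hrel : forall d1 d2, In d1 D -> In d2 D -> In (gmul d1 d2) D ->
              lift (gmul d1 d2) = gmul (lift d1) (lift d2)).
    { intros d1 d2 h1 h2 h3. unfold lift. rewrite <- (phi_to_hom L phi hphih N K).
      destruct (hN' (d1, d2)) as [hNN hr]; [apply in_prod; auto|].
      simpl in hr, hNN. symmetry.
      rewrite (phi_to_comp L phi N _ N' K), (phi_to_comp L phi N (lift0 _) N' K) by (unfold K; lia).
      rewrite hr; auto. }
    assert (hinjD : forall d d', In d D -> In d' D -> toL G D d = toL G D d' -> d = d').
    { intros d d' hd hd' E. rewrite <- (htoL d hd), <- (htoL d' hd'). rewrite E. reflexivity. }
    destruct (hii K Q (map lift D) hQ) as [X [hCX [h [hh hah]]]].
    { intros x y hx hy E. apply in_map_iff in hx, hy.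
      destruct hx as [d [<- hd]], hy as [d' [<- hd']].
      rewrite !hlift in E by auto. rewrite (hinjD d d'); auto. }
    exists X. split; auto. exists (fun g => h (lift g)).
    destruct hah as [a1 [a2 a3]]. split; [|split].
    + intros d d' hd hd' E. apply hinjD; auto.
      rewrite <- !hlift by auto. f_equal. apply a1; auto; apply in_map; auto.
    + intros d1 d2 h1 h2 h3. simpl. rewrite hrel by auto. apply hh.
    + intros g q hg hq.
      assert (El : @plen G g = @plen (L K) (lift g)).
      { rewrite <- (proj2 (hpsi K) (lift g)). rewrite hlift by auto.
        simpl. rewrite htoL by auto. reflexivity. }
      rewrite El. apply (a3 (lift g) q); auto. apply in_map; auto.
Qed.
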